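(* Let $R$ be a supertropical semiring such that $eR$ is a semifield with $\mathcal G\neq\{e\}$, let $(q,b)$ be a quadratic pair on an $R$-module $V$, and let $x,y\in V\setminus\{0\}$. Suppose either that $(x,y)$ is weakly CS, or that $(x,y)$ is almost CS and both $q(x)$ and $q(y)$ lie in $eR$. Then $q(\lambda x+\mu y)=q(\lambda x)+q(\mu y)$ for all $\lambda,\mu\in R$ (equivalently, $q$ is additive on $Rx+Ry$).
   Context: All semirings are commutative with $1$. A semiring $R$ is supertropical if $e:=1+1$ satisfies $e+e=e$ and, for all $x,y\in R$: if $ex\neq ey$ then $x+y\in\{x,y\}$, and if $ex=ey$ then $x+y=ey$. $eR$ is totally ordered by $u\le v\iff u+v=v$; write $x\le_\nu y$, $x\cong_\nu y$, $x<_\nu y$ for $ex\le ey$, $ex=ey$, $ex<ey$. $\mathcal G=eR\setminus\{0\}$; ''$eR$ is a semifield'' means every element of $\mathcal G$ is invertible in the semiring $eR$ (whose unit is $e$). A quadratic form on an $R$-module $V$ is a map $q:V\to R$ with $q(ax)=a^2q(x)$ such that some symmetric bilinear $b$ satisfies $q(x+y)=q(x)+q(y)+b(x,y)$; $(q,b)$ is then a quadratic pair. A pair $(x,y)$ of nonzero vectors is weakly CS if $b(x,y)^2\le_\nu q(x)q(y)$, and almost CS if $b(x,y)^2\le_\nu c\,q(x)q(y)$ for every $c\in\mathcal G$ with $c>e$. *)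

(* Defs.v *)
From HB Require Import structures.
From mathcomp Require Import all_boot all_order all_algebra.
Set Implicit Arguments. Unset Strict Implicit. Unset Printing Implicit Defensive.
Import GRing.Theory.
Local Open Scope ring_scope.

Section Supertropical.
Variable R : comPzSemiRingType.

Definition ste : R := 1 + 1.

Definition supertropical : Prop :=
  ste + ste = ste /\
  forall x y : R,
    (ste * x <> ste * y -> x + y = x \/ x + y = y) /\
    (ste * x = ste * y -> x + y = ste * y).

Definition in_eR (a : R) : Prop := exists z : R, a = ste * z.

Definition eR_le (u v : R) : Prop := u + v = v.

Definition nu_le (x y : R) : Prop := eR_le (ste * x) (ste * y).

Definition in_G (a : R) : Prop := in_eR a /\ a <> 0.

Definition eR_semifield : Prop :=
  forall a, in_G a -> exists b, in_eR b /\ a * b = ste.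

Definition G_ne_e : Prop := ~ (forall a, in_G a <-> a = ste).

Variable V : lSemiModType R.

Definition quadratic_pair (q : V -> R) (b : V -> V -> R) : Prop :=
  (forall (a : R) (x : V), q (a *: x) = a ^+ 2 * q x) /\
  (forall x y, b x y = b y x) /\
  (forall x x' y, b (x + x') y = b x y + b x' y) /\
  (forall (a : R) x y, b (a *: x) y = a * b x y) /\
  (forall x y, q (x + y) = q x + q y + b x y).

Definition weakly_CS (q : V -> R) (b : V -> V -> R) (x y : V) : Prop :=
  x <> 0 /\ y <> 0 /\ nu_le (b x y ^+ 2) (q x * q y).

Definition almost_CS (q : V -> R) (b : V -> V -> R) (x y : V) : Prop :=
  x <> 0 /\ y <> 0 /\
  forall c : R, in_G c -> eR_le ste c -> c <> ste ->
    nu_le (b x y ^+ 2) (c * q x * q y).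

End Supertropical.

(* Main.v *)
Require Import Defs.
From mathcomp Require Import all_boot all_order all_algebra.
From mathcomp Require Import ring.
From Stdlib Require Import Classical.
Import GRing.Theory.
Local Open Scope ring_scope.

Section Aux.
Variable R : comPzSemiRingType.
Hypothesis H : supertropical R.
Local Notation e := (ste R).
Implicit Types (x y z a b A B M : R).

Lemma L_ee : e * e = e.
Proof. have [H1 _] := H. by rewrite {2}/ste mulrDr mulr1. Qed.

Lemma L_ee' t : e * t * e = e * t.
Proof. transitivity (e * e * t); [ring | by rewrite L_ee]. Qed.

Lemma L_eex (x : R) : e * x + e * x = e * x.
Proof. have [H1 _] := H. by rewrite -mulrDl H1. Qed.

Lemma L_tot x y : nu_le x y \/ nu_le y x.
Proof.
rewrite /nu_le /eR_le. have [_ H2] := H.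
case: (classic (e * x = e * y)) => [E|E].
  by left; rewrite E L_eex.
have [H3 _] := H2 x y. have [E1|E1] := H3 E.
  by right; move: E1 => /(congr1 (fun t => e * t)); rewrite mulrDr addrC.
by left; move: E1 => /(congr1 (fun t => e * t)); rewrite mulrDr.
Qed.

Lemma L_antisym {x y} : nu_le x y -> nu_le y x -> e * x = e * y.
Proof. rewrite /nu_le /eR_le => h1 h2. by rewrite -h2 addrC h1. Qed.

Lemma L_trans {x y z} : nu_le x y -> nu_le y z -> nu_le x z.
Proof. rewrite /nu_le /eR_le => h1 h2. by rewrite -h2 addrA h1. Qed.

Lemma L_mulr {x y} z : nu_le x y -> nu_le (x * z) (y * z).
Proof. rewrite /nu_le /eR_le => h1. by rewrite !mulrA -mulrDl h1. Qed.

Lemma L_mull {x y} z : nu_le x y -> nu_le (z * x) (z * y).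
Proof. rewrite ![z * _]mulrC. exact: L_mulr. Qed.

Lemma L_eqle {x y} : e * x = e * y -> nu_le x y.
Proof. rewrite /nu_le /eR_le => ->. exact: L_eex. Qed.

Lemma L_lsum x y : nu_le x (x + y).
Proof. rewrite /nu_le /eR_le mulrDr addrA. by rewrite L_eex. Qed.

Lemma L_le_neq {x y} : nu_le x y -> e * x <> e * y -> x + y = y.
Proof.
move=> h1 ne. have [_ H2] := H. have [H3 _] := H2 x y. have [E|E] := H3 ne => //.
exfalso; apply: ne. apply: L_antisym => //.
by move: E => /(congr1 (fun t => e * t)); rewrite mulrDr addrC.
Qed.

Lemma L_eq {x y} : e * x = e * y -> x + y = e * y.
Proof. move=> E. have [_ H2] := H. have [_ H3] := H2 x y. exact: H3. Qed.

Lemma L_le0 {x} : nu_le x 0 -> e * x = 0.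
Proof. by rewrite /nu_le /eR_le mulr0 addr0. Qed.

Lemma L_ineR {a} : in_eR a -> e * a = a.
Proof. by move=> [z ->]; rewrite mulrA L_ee. Qed.

Hypothesis HS : eR_semifield R.

Lemma L_cancel {x y z} : e * (x * z) = e * (y * z) -> e * z <> 0 -> e * x = e * y.
Proof.
move=> h nz. have [w [_ hw]] := HS (e * z) (conj (ex_intro _ z erefl) nz).
have -> : e * x = e * (x * z) * w * e.
  transitivity (e * x * (e * z * w)); first by rewrite hw L_ee'.
  ring.
rewrite h.
transitivity (e * y * (e * z * w)); first ring.
by rewrite hw L_ee'.
Qed.

Lemma L_ne0 {x y} : nu_le x y -> e * x <> e * y -> e * y <> 0.
Proof.
move=> h ne z. apply: ne. rewrite z. apply: L_le0. by rewrite /nu_le /eR_le mulr0 -z.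
Qed.

Lemma L_sq {b M} : nu_le (b * b) (M * M) -> nu_le b M.
Proof.
move=> h. have [//|h2] := L_tot b M.
case: (classic (e * M = e * b)) => [E|E]; first by apply: L_eqle.
have nz := L_ne0 h2 E.
have h3 : nu_le (M * M) (M * b) := L_mull M h2.
have h4 : nu_le (M * b) (b * b) := L_mulr b h2.
have := L_antisym h4 (L_trans h h3). move=> /L_cancel /(_ nz) => E2.
by exfalso; apply: E.
Qed.

Lemma L_AB A B : nu_le (A * B) ((A + B) * (A + B)).
Proof.
apply: (@L_trans _ ((A + B) * B)); first by apply: L_mulr; apply: L_lsum.
apply: L_mull. rewrite addrC. apply: L_lsum.
Qed.

Lemma L_finish {b M} : nu_le b M -> (e * b = e * M -> e * M = M) -> M + b = M.
Proof.
move=> h1 h2. rewrite addrC.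
case: (classic (e * b = e * M)) => [E|E].
  by rewrite L_eq // h2.
exact: L_le_neq.
Qed.

Lemma L_key {b A B} : nu_le (b * b) (A * B) -> e * b = e * (A + B) -> nu_le A B ->
  e * A = e * B.
Proof.
move=> h E hAB. case: (classic (e * A = e * B)) => [//|ne].
have M : A + B = B := L_le_neq hAB ne.
rewrite M in E.
have nz := L_ne0 hAB ne.
have h1 : nu_le (A * B) (B * B) := L_mulr B hAB.
have E2 : e * (b * b) = e * (B * B).
    transitivity ((e * b) * b); first ring. rewrite E.
    transitivity (B * (e * b)); first ring. rewrite E. ring.
have h2 : nu_le (B * B) (b * b) by apply: L_eqle.
have := L_antisym h1 (L_trans h2 h). by move=> /L_cancel /(_ nz).
Qed.

Lemma L_exists_c : e <> 0 -> G_ne_e R ->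
  exists c, in_G c /\ eR_le e c /\ c <> e.
Proof.
move=> e0 hG.
have Ge : in_G e by split=> //; exists 1; rewrite mulr1.
have [a ha] : exists a, ~ (in_G a <-> a = e).
  apply: NNPP => hn. apply: hG => a. apply: NNPP => h. apply: hn. by exists a.
have [aG ae] : in_G a /\ a <> e.
  case: (classic (in_G a)) => [g|g]; case: (classic (a = e)) => [E|E].
  - by exfalso; apply: ha; split.
  - by split.
  - by exfalso; apply: g; rewrite E.
  - by exfalso; apply: ha; split => // /E.
have ea : e * a = a by apply: L_ineR; case: aG.
have [h|h] := L_tot e a.
  exists a; split=> //; split=> //. by move: h; rewrite /nu_le /eR_le L_ee ea.
move: h; rewrite /nu_le /eR_le L_ee ea => h.
have [w [[z wz] hw]] := HS a aG.
have ew : e * w = w by rewrite wz mulrA L_ee.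
have [h'|h'] := L_tot e w.
  exists w; split; [split; [by exists z|] | split].
  - by move=> w0; apply: e0; rewrite -hw w0 mulr0.
  - by move: h'; rewrite /nu_le /eR_le L_ee ew.
  - by move=> we; apply: ae; rewrite -ea mulrC -we hw.
move: h'; rewrite /nu_le /eR_le L_ee ew => h'.
exfalso; apply: ae.
have : a * (w + e) = a * e by rewrite h'.
rewrite mulrDr hw [a * e]mulrC ea => h''.
by rewrite -h'' addrC h.
Qed.

Lemma main_aux (V : lSemiModType R)
    (q : V -> R) (b : V -> V -> R) (x y : V) :
  G_ne_e R ->
  quadratic_pair q b ->
  x <> 0 -> y <> 0 ->
  (weakly_CS q b x y \/ (almost_CS q b x y /\ in_eR (q x) /\ in_eR (q y))) ->
  forall lambda mu : R,
    q (lambda *: x + mu *: y) = q (lambda *: x) + q (mu *: y).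
Proof.
move=> HG [qZ [bS [bD [bZ qD]]]] x0 y0 hcs la mu.
case: (classic (e = 0)) => [e0|e0].
  have all0 : forall r : R, r = 0.
    move=> r. have [_ H2] := H. have [_ h] := H2 r 0.
    by rewrite -[r]addr0 h; rewrite e0 ?mul0r //.
  by rewrite (all0 (q _)) (all0 (q (la *: x))).
rewrite qD.
have hb : b (la *: x) (mu *: y) = la * mu * b x y.
  by rewrite bZ bS bZ bS mulrA.
rewrite hb !qZ.
set A := la ^+ 2 * q x. set B := mu ^+ 2 * q y. set be := la * mu * b x y.
set M := A + B.
have scale : forall u v : R, nu_le (b x y ^+ 2) (u * q x * q y) ->
    nu_le (be * be) (u * (A * B)).
  move=> u v h. have := L_mulr (la ^+ 2 * mu ^+ 2) h.
  have -> : b x y ^+ 2 * (la ^+ 2 * mu ^+ 2) = be * be by rewrite /be; ring.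
  have -> : u * q x * q y * (la ^+ 2 * mu ^+ 2) = u * (A * B) by rewrite /A /B; ring.
  done.
case: hcs => [[_ [_ hw]]|[[_ [_ ha]] [hx hy]]].
- have h1 : nu_le (be * be) (A * B).
    have h := scale 1 0. rewrite !mul1r in h. exact: h.
  have h2 : nu_le be M := L_sq (L_trans h1 (L_AB A B)).
  apply: (L_finish h2) => E.
  have eAB : e * A = e * B.
    have [h|h] := L_tot A B; first exact: (L_key h1 E h).
    apply: esym; apply: (L_key (b := be) _ _ h); first by rewrite [B * A]mulrC.
    by rewrite addrC.
  rewrite /M (L_eq eAB) mulrA L_ee //.
- have eA : e * A = A by apply: (L_ineR); case: hx => z hz; exists (la ^+ 2 * z); rewrite /A hz; ring.
  have eB : e * B = B by apply: (L_ineR); case: hy => z hz; exists (mu ^+ 2 * z); rewrite /B hz; ring.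
  have eM : e * M = M by rewrite /M mulrDr eA eB.
  apply: (L_finish) => //.
  have [//|h2] := L_tot be M.
  case: (classic (e * M = e * be)) => [E|E]; first by apply: (L_eqle).
  have nz := L_ne0 h2 E.
  exfalso.
  case: (classic (e * M = 0)) => [M0|M0].
    have [c [cG [ce cne]]] := L_exists_c e0 HG.
    have := scale c 0 (ha c cG ce cne).
    have eA0 : e * A = 0 by apply: L_le0; rewrite /nu_le /eR_le mulr0 -M0; exact: L_lsum.
    rewrite /nu_le /eR_le.
    have -> : e * (c * (A * B)) = c * (e * A) * B by ring.
    rewrite eA0 mulr0 mul0r addr0 => E2.
    apply: (nz). rewrite -[0](mulr0 e). apply: (L_cancel (z := be)) => //. by rewrite mul0r mulr0.
  have [w [_ hw]] := HS (e * M) (conj (ex_intro _ M (erefl (e * M))) M0).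
  set c := e * (be * w).
  have cG : in_G c.
    split; first by exists (be * w).
    move=> c0. apply: (nz).
    transitivity (e * be * (e * M * w)); first by rewrite hw L_ee'.
    transitivity (c * (e * M)); first by rewrite /c; ring.
    by rewrite c0 mul0r.
  have ce : eR_le e c.
    move: h2; rewrite /nu_le /eR_le => h2.
    have := congr1 (fun t => t * w) h2. rewrite mulrDl hw /c mulrA //.
  have cne : c <> e.
    move=> ce'. apply: E.
    transitivity (c * (e * M)); first by rewrite ce' mulrA L_ee.
    transitivity (e * be * (e * M * w)); first by rewrite /c; ring.
    by rewrite hw L_ee'.
  have h3 := scale c 0 (ha c cG ce cne).
  have h4 : nu_le (c * (A * B)) (c * (M * M)) := L_mull c (L_AB A B).
  have E5 : e * (c * (M * M)) = e * (be * M).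
    transitivity (e * be * M * (e * M * w)); first by rewrite /c; ring.
    by rewrite hw; transitivity (e * e * (be * M)); [ring | rewrite L_ee].
  have h5 : nu_le (be * be) (be * M).
    have := L_trans h3 h4. by rewrite /nu_le /eR_le E5.
  have h6 : nu_le (M * be) (be * be) := L_mulr be h2.
  rewrite [be * M]mulrC in h5.
  have := L_antisym h6 h5. move=> /L_cancel /(_ nz). exact: E.
Qed.

End Aux.

Theorem theorem1p12 (R : comPzSemiRingType) (V : lSemiModType R)
    (q : V -> R) (b : V -> V -> R) (x y : V) :
  supertropical R -> eR_semifield R -> G_ne_e R ->
  quadratic_pair q b ->
  x <> 0 -> y <> 0 ->
  (weakly_CS q b x y \/ (almost_CS q b x y /\ in_eR (q x) /\ in_eR (q y))) ->
  forall lambda mu : R,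
    q (lambda *: x + mu *: y) = q (lambda *: x) + q (mu *: y).
Proof. move=> H HS HG. exact: main_aux. Qed.
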